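(* Let $\alpha\in\mathbb{N}$, let $m$ be a positive odd integer with $m>6\alpha+2$, and let $\mathbb{S}=\langle 6,6\alpha+2,m\rangle$. Define $\beta_1=6\,x_1$, $\beta_2=(6\alpha+2)\,x_2$, $\beta_3=m\,x_3$, where $x_1=\min\{x\ge1:6x\in\langle 6\alpha+2,m\rangle\}$, $x_2=\min\{x\ge1:(6\alpha+2)x\in\langle 6,m\rangle\}$, $x_3=\min\{x\ge1:mx\in\langle 6,6\alpha+2\rangle\}$. Factorizations are taken with respect to $(6,6\alpha+2,m)$. Then: (i) If $6\alpha+2<m\le 9\alpha+3$ and $3\mid m$, then $\beta_1=2m$ and its factorizations are $(0,0,2)$ and $\left(\frac{m-k(3\alpha+1)}{3},k,0\right)$ for $k\in\mathbb{N}$ with $k\le\frac{m}{3\alpha+1}$ and $3\mid m-k(3\alpha+1)$. Otherwise, $\beta_1=18\alpha+6$ and its factorizations are $(3\alpha+1,0,0)$ and $(0,3,0)$. (ii) $\beta_2=18\alpha+6$. If $6\alpha+2<m\le 9\alpha+3$ and $3\mid m$, then its factorizations are $\left(\frac{9\alpha+3-m}{3},0,2\right)$, $(3\alpha+1,0,0)$ and $(0,3,0)$. Otherwise, its factorizations are $(3\alpha+1,0,0)$ and $(0,3,0)$. (iii) $\beta_3=2m$ and its factorizations are $(0,0,2)$ and $\left(\frac{m-k(3\alpha+1)}{3},k,0\right)$ for $k\in\mathbb{N}$ with $k\le\frac{m}{3\alpha+1}$ and $3\mid m-k(3\alpha+1)$.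
   Context: $\mathbb{N}=\{0,1,2,\dots\}$. $\langle a_1,\dots,a_e\rangle$ is the set of $\mathbb{N}$-linear combinations of $a_1,\dots,a_e$. A factorization of $a\in\langle a_1,a_2,a_3\rangle$ is a tuple $(\eta_1,\eta_2,\eta_3)\in\mathbb{N}^3$ with $\eta_1a_1+\eta_2a_2+\eta_3a_3=a$. *)

(* Defs.v *)
From mathcomp Require Import all_boot.
Set Implicit Arguments. Unset Strict Implicit. Unset Printing Implicit Defensive.

Definition in_sg2 (a b n : nat) : Prop := exists u v : nat, n = u * a + v * b.

Definition is_fact (a1 a2 a3 n e1 e2 e3 : nat) : Prop :=
  e1 * a1 + e2 * a2 + e3 * a3 = n.

Definition is_min_pos (P : nat -> Prop) (x : nat) : Prop :=
  1 <= x /\ P x /\ (forall y, 1 <= y -> P y -> x <= y).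

(* Main.v *)
Require Import Defs.
From mathcomp Require Import all_boot.
From mathcomp Require Import zify.

Lemma oddE (m : nat) : odd m -> m = (m./2).*2 + 1.
Proof. move=> Ho; have Hm := odd_double_half m; rewrite Ho /= in Hm; lia. Qed.

Lemma L2m (alpha m e1 e2 e3 : nat) : odd m -> 6*alpha+2 < m ->
  (e1 * 6 + e2 * (6 * alpha + 2) + e3 * m = 2 * m <->
  ((e1, e2, e3) = (0, 0, 2) \/
    exists k : nat, k * (3 * alpha + 1) <= m /\ 3 %| m - k * (3 * alpha + 1) /\
      (e1, e2, e3) = ((m - k * (3 * alpha + 1)) %/ 3, k, 0))).
Proof.
move=> /oddE Hm Ha; split.
  move=> H.
  have : e3 <= 2 by nia.
  case: e3 H => [|[|[|e3]]] // H _.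
  - right; exists e2; split; first lia. split; first lia.
    congr (_, _, _); lia.
  - lia.
  - left; congr (_,_,_); nia.
case=> [[-> -> ->]|[k [H1 [H2 [-> -> ->]]]]]; lia.
Qed.

Lemma L3a (alpha m e1 e2 e3 : nat) : odd m -> 6*alpha+2 < m ->
  e1 * 6 + e2 * (6 * alpha + 2) + e3 * m = 18 * alpha + 6 ->
  ((e1, e2, e3) = ((9 * alpha + 3 - m) %/ 3, 0, 2) /\ m <= 9 * alpha + 3 /\ 3 %| m)
  \/ (e1, e2, e3) = (3 * alpha + 1, 0, 0) \/ (e1, e2, e3) = (0, 3, 0).
Proof.
move=> /oddE Hm Ha H.
have : e3 <= 2 by nia.
case: e3 H => [|[|[|e3]]] // H _.
- right. have : e2 <= 3 by nia.
  case: e2 H => [|[|[|[|e2]]]] H _; try lia.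
  + left; congr (_,_,_); lia.
  + right; congr (_,_,_); lia.
- lia.
- left. have : e2 = 0 by nia.
  move=> E; subst e2. split; first (congr (_,_,_); lia). lia.
Qed.

Theorem theorem7 (alpha m x1 x2 x3 : nat) :
  odd m -> 6 * alpha + 2 < m ->
  is_min_pos (fun x => in_sg2 (6 * alpha + 2) m (6 * x)) x1 ->
  is_min_pos (fun x => in_sg2 6 m ((6 * alpha + 2) * x)) x2 ->
  is_min_pos (fun x => in_sg2 6 (6 * alpha + 2) (m * x)) x3 ->
  let beta1 := 6 * x1 in
  let beta2 := (6 * alpha + 2) * x2 in
  let beta3 := m * x3 in
  let fact := fun n e1 e2 e3 => is_fact 6 (6 * alpha + 2) m n e1 e2 e3 in
  let cond := (6 * alpha + 2 < m) && (m <= 9 * alpha + 3) && (3 %| m) in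
  let factsA := fun e1 e2 e3 : nat =>
    (e1, e2, e3) = (0, 0, 2) \/
    exists k : nat, k * (3 * alpha + 1) <= m /\ 3 %| m - k * (3 * alpha + 1) /\
      (e1, e2, e3) = ((m - k * (3 * alpha + 1)) %/ 3, k, 0) in
  let factsB := fun e1 e2 e3 : nat =>
    (e1, e2, e3) = (3 * alpha + 1, 0, 0) \/ (e1, e2, e3) = (0, 3, 0) in
  (* (i) *)
  (if cond then
     beta1 = 2 * m /\ (forall e1 e2 e3, fact beta1 e1 e2 e3 <-> factsA e1 e2 e3)
   else
     beta1 = 18 * alpha + 6 /\
     (forall e1 e2 e3, fact beta1 e1 e2 e3 <-> factsB e1 e2 e3)) /\
  (* (ii) *)
  beta2 = 18 * alpha + 6 /\
  (if cond then
     forall e1 e2 e3, fact beta2 e1 e2 e3 <->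
       ((e1, e2, e3) = ((9 * alpha + 3 - m) %/ 3, 0, 2) \/ factsB e1 e2 e3)
   else
     forall e1 e2 e3, fact beta2 e1 e2 e3 <-> factsB e1 e2 e3) /\
  (* (iii) *)
  beta3 = 2 * m /\
  (forall e1 e2 e3, fact beta3 e1 e2 e3 <-> factsA e1 e2 e3).
Proof.
move=> Ho Ha [H11 [[v1 [w1 P1]] M1]] [H21 [[u2 [v2 P2]] M2]] [H31 [[u3 [v3 P3]] M3]].
have Hm := oddE m Ho.
have Ex3 : x3 = 2.
  have [q [r [Hr Hqr]]] : exists q r, r < 3 /\ m = 3*q + r by exists (m%/3), (m%%3); lia.
  have : x3 <= 2.
    apply: M3 => //; exists (q - r * alpha), r.
    by case: r Hr Hqr => [|[|[|r]]] Hr Hqr; lia.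
  move=> Hx; have : x3 <> 1 by move=> E; subst x3; lia.
  lia.
have Ex2 : x2 = 3.
  have : x2 <= 3 by apply: M2 => //; exists (3 * alpha + 1), 0; lia.
  case: x2 H21 P2 {M2} => [|[|[|[|x2]]]] // _ P2 _.
  - have : v2 = 0 by nia.
    move=> E; subst v2; lia.
  - have : v2 <= 1 by nia.
    case: v2 P2 => [|[|v2]] P2 _; lia.
have X1a : x1 <= 3 * alpha + 1 by apply: M1; [lia | exists 3, 0; lia].
have X1b : ((6 * alpha + 2 < m) && (m <= 9 * alpha + 3) && (3 %| m)) -> 3 * x1 <= m.
  move=> /andP [/andP [_ C2] C3].
  have : x1 <= m %/ 3 by apply: M1; [lia | exists 0, 2; lia].
  lia.
have Eb1 : 6 * x1 = if ((6 * alpha + 2 < m) && (m <= 9 * alpha + 3) && (3 %| m)) then 2 * m else 18 * alpha + 6.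
  have : w1 <= 2 by nia.
  case: w1 P1 => [|[|[|w1]]] P1 _; try lia.
  - have : v1 <= 3 by nia.
    case: v1 P1 => [|[|[|[|v1]]]] P1 _; try lia.
    case: ifP => C; last lia.
    lia.
  - have : v1 = 0 by nia.
    move=> E; subst v1.
    case: ifP => C; first lia.
    exfalso; move: C; lia.
move=> beta1 beta2 beta3 fact cond factsA factsB.
have Eb2 : beta2 = 18 * alpha + 6 by rewrite /beta2 Ex2; lia.
have Eb3 : beta3 = 2 * m by rewrite /beta3 Ex3; lia.
have F3 : forall e1 e2 e3, fact beta3 e1 e2 e3 <-> factsA e1 e2 e3.
  move=> e1 e2 e3; rewrite /fact /is_fact Eb3 /factsA; exact: L2m.
have F2 : forall e1 e2 e3, fact beta2 e1 e2 e3 ->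
    ((e1, e2, e3) = ((9 * alpha + 3 - m) %/ 3, 0, 2) /\ cond) \/ factsB e1 e2 e3.
  move=> e1 e2 e3; rewrite /fact /is_fact Eb2 => H.
  case: (L3a alpha m e1 e2 e3 Ho Ha H) => [[E [C1 C2]]|]; last by right.
  left; split => //; rewrite /cond; apply/andP; split => //; apply/andP; split => //.
have F2' : forall e1 e2 e3, factsB e1 e2 e3 -> fact beta2 e1 e2 e3.
  move=> e1 e2 e3; rewrite /fact /is_fact Eb2.
  by case=> [[-> -> ->]|[-> -> ->]]; lia.
split.
  rewrite /beta1 Eb1 /cond; case: ifP => C; rewrite C; split => //.
  - move=> e1 e2 e3; rewrite /fact /is_fact /factsA; exact: L2m.
  - move=> e1 e2 e3; split; last by move/F2'; rewrite /fact /is_fact Eb2.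
    move=> H; have : fact beta2 e1 e2 e3 by rewrite /fact /is_fact Eb2.
    by case/F2 => [[_ C']|]; [move: C'; rewrite /cond C|].
split => //.
split; last by split.
case: ifP => C.
  move=> e1 e2 e3; split; first by case/F2 => [[E _]|]; [left|right].
  case=> [[-> -> ->]|/F2' //].
  move: C; rewrite /fact /is_fact Eb2 /cond => /andP [/andP [_ C2] C3]; lia.
move=> e1 e2 e3; split; last exact: F2'.
by case/F2 => [[_ C']|]; [rewrite C' in C|].
Qed.
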